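(* Let $w$ be a weight on $\mathbb{R}^n$, let $\varphi$ be as in the context, and let $1\le q<p<\infty$. Then $A(\mathcal M^{q}(\varphi))\subset A(\mathcal M^{p}(\varphi))$; that is, if $[w]_{A(\mathcal M^{q}(\varphi))}<\infty$ then $[w]_{A(\mathcal M^{p}(\varphi))}<\infty$.
   Context: A weight is a nonnegative locally integrable function on $\mathbb{R}^n$. Let $\varphi$ be a function from the set of Euclidean balls of $\mathbb{R}^n$ to $(0,\infty)$; standing assumptions: $\varphi$ is doubling ($\varphi(2B)\le C\varphi(B)$ for all balls $B$) and reverse doubling (there are $\delta>0$, $C>0$ with $\varphi(B_1)/\varphi(B_2)\le C(|B_1|/|B_2|)^\delta$ whenever $B_1\subset B_2$ are balls), and characteristic functions of balls belong to the Morrey spaces considered. For $1\le p<\infty$, $\mathcal M^{p}(\varphi,w)$ is the space of measurable $f$ with $\|f\|_{\mathcal M^{p}(\varphi,w)}:=\sup_B\big(\varphi(B)^{-1}\int_B|f|^pw\big)^{1/p}<\infty$, the supremum over all balls. For a Banach lattice $X$ of measurable functions, its Köthe dual $X'$ consists of measurable $g$ with $\|g\|_{X'}:=\sup\{\int_{\mathbb{R}^n}|fg|: \|f\|_X\le 1\}<\infty$. Define $[w]_{A(\mathcal M^{p}(\varphi))}:=\sup_B \|\chi_B\|_{\mathcal M^{p}(\varphi,w)}\|\chi_B\|_{\mathcal M^{p}(\varphi,w)'}/|B|$ (supremum over all balls $B$), and $A(\mathcal M^{p}(\varphi))$ is the class of weights with this quantity finite. *)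

(* Defs.v *)
From HB Require Import structures.
From mathcomp Require Import all_boot all_order all_algebra.
From mathcomp Require Import all_classical all_reals all_analysis.
Set Implicit Arguments. Unset Strict Implicit. Unset Printing Implicit Defensive.
Import Order.TTheory GRing.Theory Num.Theory.
Local Open Scope classical_set_scope.
Local Open Scope ring_scope.

(* Points of R^n are n-tuples of reals, with the product (Borel) sigma-algebra. *)
Notation Rn R n := (n.-tuple R).

(* n-dimensional Lebesgue integral of a nonnegative function, computed as an
   iterated one-dimensional Lebesgue integral (equal to the integral against the
   n-dimensional Lebesgue measure for nonnegative measurable functions, by Tonelli). *)
Fixpoint iint {R : realType} (n : nat) : (Rn R n -> \bar R) -> \bar R :=
  match n return (Rn R n -> \bar R) -> \bar R with
  | 0 => fun F => F [tuple]
  | m.+1 => fun F =>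
      (\int[@lebesgue_measure R]_x iint (fun t : Rn R m => F [tuple of x :: t]))%E
  end.

Definition iint_on {R : realType} (n : nat) (A : set (Rn R n)) (F : Rn R n -> \bar R) :=
  iint (fun x => ((\1_A x : R)%:E * F x)%E).

Definition eball {R : realType} (n : nat) (c : Rn R n) (r : R) : set (Rn R n) :=
  [set x | \sum_(i < n) (tnth x i - tnth c i) ^+ 2 < r ^+ 2].

Definition is_eball {R : realType} (n : nat) (B : set (Rn R n)) :=
  exists c r, 0 < r /\ B = eball c r.

Definition vol {R : realType} (n : nat) (A : set (Rn R n)) : R :=
  fine (iint_on A (fun _ => 1%E)).

Definition weight {R : realType} (n : nat) (w : Rn R n -> R) :=
  measurable_fun setT w /\ (forall x, 0 <= w x) /\
  (forall B, is_eball B -> (iint_on B (fun x => (w x)%:E) < +oo)%E).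

Definition phi_admissible {R : realType} (n : nat) (phi : set (Rn R n) -> R) :=
  (forall B, is_eball B -> 0 < phi B) /\
  (exists C : R, forall c r, 0 < r -> phi (eball c (2 * r)) <= C * phi (eball c r)) /\
  (exists delta C : R, 0 < delta /\ 0 < C /\
     forall B1 B2, is_eball B1 -> is_eball B2 -> B1 `<=` B2 ->
       phi B1 / phi B2 <= C * powR (vol B1 / vol B2) delta).

Definition morrey_norm {R : realType} (n : nat) (p : R) (phi : set (Rn R n) -> R)
  (w : Rn R n -> R) (f : Rn R n -> R) : \bar R :=
  ereal_sup [set poweR ((phi B)^-1%:E * iint_on B (fun x => (powR `|f x| p * w x)%:E))%E
                       p^-1 | B in @is_eball R n].

Definition morrey_dual_norm {R : realType} (n : nat) (p : R) (phi : set (Rn R n) -> R)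
  (w : Rn R n -> R) (g : Rn R n -> R) : \bar R :=
  ereal_sup [set iint (fun x => (`|f x * g x|)%:E) | f in
     [set f : Rn R n -> R | measurable_fun setT f /\ (morrey_norm p phi w f <= 1)%E]].

Definition chi {R : realType} (n : nat) (B : set (Rn R n)) : Rn R n -> R :=
  fun x => \1_B x.

Definition A_const {R : realType} (n : nat) (p : R) (phi : set (Rn R n) -> R)
  (w : Rn R n -> R) : \bar R :=
  ereal_sup [set (morrey_norm p phi w (chi B) *
                  morrey_dual_norm p phi w (chi B) * (vol B)^-1%:E)%E
            | B in @is_eball R n].

(* Main.v *)
Require Import Defs.
From HB Require Import structures.
From mathcomp Require Import all_boot all_order all_algebra.
From mathcomp Require Import all_classical all_reals all_analysis.
Import Order.TTheory GRing.Theory Num.Theory.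
Local Open Scope classical_set_scope.
Local Open Scope ring_scope.
From mathcomp Require Import measurable_realfun.
From mathcomp Require Import ring lra.
Section Iint.
Variable R : realType.
Local Open Scope ereal_scope.

Lemma iint_ge0 n (F : n.-tuple R -> \bar R) : (forall x, 0 <= F x) -> 0 <= iint F.
Proof.
elim: n F => [|n IH] F F0 /=; first exact: F0.
by apply: integral_ge0 => x _; apply: IH.
Qed.

Lemma mid_RR : measurable_fun (T := measurableTypeR R) (U := R) setT (fun x => x).
Proof. by move=> _ A mA; rewrite setTI. Qed.

Lemma iint_param_meas n : forall d (Y : measurableType d)
  (F : Y * n.-tuple R -> \bar R), measurable_fun setT F -> (forall z, 0 <= F z) ->
  measurable_fun setT (fun y => iint (fun t => F (y, t))).
Proof.
elim: n => [|n IH] d Y F mF F0 /=.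
  apply: measurableT_comp mF _; apply: measurable_fun_pair => //.
pose G : (Y * measurableTypeR R) * n.-tuple R -> \bar R := fun z => F (z.1.1, [tuple of z.1.2 :: z.2]).
have mG : measurable_fun setT G.
  apply: measurableT_comp mF _; apply: measurable_fun_pair.
    exact: measurableT_comp measurable_fst measurable_fst.
  apply: (measurable_cons (f := fun z : (Y * measurableTypeR R) * n.-tuple R => (z.1.2 : R)) (g := snd)).
    apply: measurableT_comp mid_RR _.
    exact: measurableT_comp measurable_snd measurable_fst.
  exact: measurable_snd.
have mH := IH _ _ G mG (fun z => F0 _).
have H0 : forall yx, 0 <= iint (fun t => G (yx, t)) by move=> yx; apply: iint_ge0 => t; exact: F0.
exact: (measurable_fun_fubini_tonelli_F _ mH H0).
Qed.


Lemma cons_meas n (F : n.+1.-tuple R -> \bar R) (x : R) : measurable_fun setT F ->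
  measurable_fun setT (fun t : n.-tuple R => F [tuple of x :: t]).
Proof.
move=> mF; apply: measurableT_comp mF _.
exact: (measurable_cons (f := fun _ : n.-tuple R => x) (g := id)).
Qed.

Lemma slice_meas n (F : n.+1.-tuple R -> \bar R) : measurable_fun setT F ->
  (forall z, 0 <= F z) ->
  measurable_fun (T := measurableTypeR R) setT
    (fun x => iint (fun t : n.-tuple R => F [tuple of x :: t])).
Proof.
move=> mF F0.
pose G : measurableTypeR R * n.-tuple R -> \bar R := fun z => F [tuple of (z.1 : R) :: z.2].
have mG : measurable_fun setT G.
  apply: measurableT_comp mF _.
  apply: (measurable_cons (f := fun z : measurableTypeR R * n.-tuple R => (z.1 : R)) (g := snd)).
    exact: measurableT_comp mid_RR measurable_fst.
  exact: measurable_snd.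
have K := @iint_param_meas n _ (measurableTypeR R) G mG (fun z => F0 _).
exact K.
Qed.

Lemma iint_le n (F G : n.-tuple R -> \bar R) : measurable_fun setT F ->
  measurable_fun setT G -> (forall x, 0 <= F x) -> (forall x, F x <= G x) ->
  iint F <= iint G.
Proof.
elim: n F G => [|n IH] F G mF mG F0 FG /=; first exact: FG.
have G0 : forall x, 0 <= G x by move=> x; exact: le_trans (F0 x) (FG x).
apply: ge0_le_integral => //.
- by move=> x _; apply: iint_ge0.
- exact: slice_meas.
- exact: slice_meas.
- move=> x _; apply: IH => //; exact: cons_meas.
Qed.

Lemma iintD n (F G : n.-tuple R -> \bar R) : measurable_fun setT F ->
  measurable_fun setT G -> (forall x, 0 <= F x) -> (forall x, 0 <= G x) ->
  iint (fun x => F x + G x) = iint F + iint G.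
Proof.
elim: n F G => [|n IH] F G mF mG F0 G0 //=.
rewrite -ge0_integralD //.
- apply: eq_integral => x _; apply: IH => //; exact: cons_meas.
- by move=> x _; apply: iint_ge0.
- exact: slice_meas.
- by move=> x _; apply: iint_ge0.
- exact: slice_meas.
Qed.

Lemma iintZ n (k : R) (F : n.-tuple R -> \bar R) : (0 <= k)%R -> measurable_fun setT F ->
  (forall x, 0 <= F x) -> iint (fun x => k%:E * F x) = k%:E * iint F.
Proof.
elim: n F => [|n IH] F k0 mF F0 //=.
rewrite -ge0_integralZl_EFin //.
- apply: eq_integral => x _; apply: IH => //; exact: cons_meas.
- by move=> x _; apply: iint_ge0.
- exact: slice_meas.
Qed.

Lemma iint0 n : iint (fun _ : n.-tuple R => 0) = 0.
Proof.
elim: n => [|n IH] //=.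
rewrite (eq_integral (fun _ => 0)) ?integral0 // => x _; exact: IH.
Qed.

End Iint.

Section H2.
Variable R : realType.

Lemma eball_meas n (c : n.-tuple R) (r : R) : measurable (eball c r).
Proof.
have mf : measurable_fun setT
   (fun x : n.-tuple R => \sum_(i < n) (tnth x i - tnth c i) ^+ 2).
  apply: measurable_sum => i; apply: measurable_funX.
  apply: measurable_funB; first exact: measurable_tnth.
  exact: measurable_cst.
have := mf measurableT `]-oo, r ^+ 2[%classic (measurable_itv _).
by rewrite setTI.
Qed.

Lemma powR_indic T (A : set T) (x : T) (a : R) : 0 < a ->
  `|\1_A x| `^ a = \1_A x.
Proof.
move=> a0; rewrite indicE; case: (x \in A) => /=.
  by rewrite normr1 powR1.
by rewrite normr0 powR0 // gt_eqF.
Qed.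

Lemma powe_step (X : \bar R) (a b Y : R) : (0 <= X)%E -> 0 < a -> 0 < b ->
  (X `^ a <= Y%:E)%E -> (X `^ (a * b) <= (Y `^ b)%:E)%E.
Proof.
case: X => [x| |] //= x0 a0 b0.
  rewrite !lee_fin => h; rewrite lee_fin in x0.
  rewrite powRrM; apply: ge0_ler_powR => //; first exact: ltW.
  - by rewrite nnegrE powR_ge0.
  - by rewrite nnegrE (le_trans (powR_ge0 _ _) h).
by rewrite gt_eqF // mulr_gt0.
Qed.

Lemma key_ineq (a s r : R) : 0 <= a -> 0 < s -> 1 < r ->
  a <= s + s `^ (1 - r) * a `^ r.
Proof.
move=> a0 s0 r1.
have [as_|sa] := leP a s.
  by apply: ler_wpDr => //; apply: mulr_ge0; apply: powR_ge0.
have a0' : 0 < a by exact: lt_trans sa.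
apply: ler_wpDl; first exact: ltW.
have r0 : 0 < r by exact: lt_trans ltr01 r1.
rewrite -(mulr_powRB1 a0 r0).
have -> : 1 - r = - (r - 1) by rewrite opprB.
rewrite powRN mulrCA ler_pMr // mulrC ler_pdivlMr ?mul1r; last exact: powR_gt0.
apply: ge0_ler_powR; rewrite ?subr_ge0 ?nnegrE; try exact: ltW.
Qed.

End H2.

Section H3.
Variable R : realType.
Variable n : nat.
Variable w : n.-tuple R -> R.
Variable phi : set (n.-tuple R) -> R.
Variables p q : R.
Hypothesis hw0 : forall x, 0 <= w x.
Hypothesis hphi : forall B, is_eball B -> 0 < phi B.
Hypothesis hq1 : 1 <= q.
Hypothesis hqp : q < p.

Let q0 : 0 < q. Proof. exact: lt_le_trans ltr01 hq1. Qed.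
Let p0 : 0 < p. Proof. exact: lt_trans q0 hqp. Qed.

Lemma Xge0 (B' : set (n.-tuple R)) (F : n.-tuple R -> R) : is_eball B' ->
  (forall x, 0 <= F x) -> (0 <= (phi B')^-1%:E * iint_on B' (fun x => (F x)%:E))%E.
Proof.
move=> hB F0; apply: mule_ge0; first by rewrite lee_fin invr_ge0 ltW // hphi.
apply: iint_ge0 => x; apply: mule_ge0; last by rewrite lee_fin.
by rewrite lee_fin indicE ler0n.
Qed.

Lemma N_step B : is_eball B -> (morrey_norm q phi w (chi B) < +oo)%E ->
  (morrey_norm p phi w (chi B) <=
    ((fine (morrey_norm q phi w (chi B))) `^ (q / p))%:E)%E.
Proof.
move=> hB hN; apply: ge_ereal_sup => _ [B' hB' <-].
have E : (fun x => (`|chi B x| `^ p * w x)%:E) = (fun x => (`|chi B x| `^ q * w x)%:E).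
  by apply/funext => x; rewrite /chi !powR_indic.
rewrite E.
set X := ((phi B')^-1%:E * _)%E.
have hX : (X `^ q^-1 <= morrey_norm q phi w (chi B))%E.
  by apply: ereal_sup_ubound; exists B'.
have X0 : (0 <= X)%E.
  by apply: Xge0 => // x; apply: mulr_ge0 => //; apply: powR_ge0.
have Nq0 : (0 <= morrey_norm q phi w (chi B))%E.
  exact: le_trans (poweR_ge0 _ _) hX.
have NqE : morrey_norm q phi w (chi B) = (fine (morrey_norm q phi w (chi B)))%:E.
  by rewrite fineK // ge0_fin_numE.
rewrite NqE in hX.
have := @powe_step _ _ _ _ _ X0 (_ : 0 < q^-1) (divr_gt0 q0 p0) hX.
  have -> : q^-1 * (q / p) = p^-1 by rewrite mulrA mulVf ?mul1r // gt_eqF.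
by move=> h; apply: h; rewrite invr_gt0.
Qed.

Lemma N_ge0 (B : set (n.-tuple R)) f : is_eball B -> (0 <= morrey_norm p phi w f)%E.
Proof.
move=> hB; apply: le_trans (poweR_ge0 _ p^-1) (ereal_sup_ubound _).
by exists B.
Qed.

Lemma zero_norm a : 0 < a -> (morrey_norm a phi w (fun _ => 0%R) <= 1)%E.
Proof.
move=> a0; apply: ge_ereal_sup => _ [B' hB' <-].
have -> : (fun x : n.-tuple R => (`|(0:R)| `^ a * w x)%:E) = (fun _ => 0%E).
  by apply/funext => x; rewrite normr0 powR0 ?mul0r // gt_eqF.
have -> : iint_on B' (fun _ => 0%E) = 0%E.
  rewrite /iint_on; under eq_fun do rewrite mule0; exact: iint0.
by rewrite mule0 poweR0r ?lee01 // invr_neq0 // gt_eqF.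
Qed.

Lemma D_ge0 a h : 0 < a -> (0 <= morrey_dual_norm a phi w h)%E.
Proof.
move=> a0; apply: (@le_trans _ _ (iint (fun x => (`|(fun _ => 0%R) x * h x|)%:E))).
  by under eq_fun do rewrite mul0r normr0; rewrite iint0.
apply: ereal_sup_ubound; exists (fun _ => 0%R) => //; split.
  exact: measurable_cst.
exact: zero_norm.
Qed.


Lemma D_step B d V s : is_eball B ->
  morrey_dual_norm q phi w (chi B) = d%:E ->
  iint_on B (fun _ => 1%E) = V%:E -> 0 < s ->
  (morrey_dual_norm p phi w (chi B) <= (s * V + s `^ (1 - p / q) * d)%:E)%E.
Proof.
move=> hB hd hV s0.
have mB : measurable B by case: hB => c [r [_ ->]]; exact: eball_meas.
have mchi : measurable_fun setT (chi B) by exact: measurable_indic.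
apply: ge_ereal_sup => _ [f [mf Nf] <-].
pose g := fun x => `|f x| `^ (p / q).
have mg : measurable_fun setT g.
  rewrite /g; apply: (measurableT_comp (@measurable_powR R (p / q)) (g := fun x => `|f x|)) => //.
  apply: measurableT_comp => //; exact: normr_measurable.
have Ng : (morrey_norm q phi w g <= 1)%E.
  apply: ge_ereal_sup => _ [B' hB' <-].
  have E : (fun x => (`|g x| `^ q * w x)%:E) = (fun x => (`|f x| `^ p * w x)%:E).
    apply/funext => x; rewrite /g ger0_norm ?powR_ge0 // -powRrM divfK //.
    by rewrite gt_eqF.
  rewrite E.
  set X := ((phi B')^-1%:E * _)%E.
  have hX : (X `^ p^-1 <= 1%:E)%E.
    apply: le_trans Nf; apply: ereal_sup_ubound; by exists B'.
  have X0 : (0 <= X)%E.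
    by apply: Xge0 => // x; apply: mulr_ge0 => //; apply: powR_ge0.
  have := @powe_step _ _ _ _ _ X0 (_ : 0 < p^-1) (divr_gt0 p0 q0) hX.
  have -> : p^-1 * (p / q) = q^-1 by rewrite mulrA mulVf ?mul1r // gt_eqF.
  rewrite powR1 /=.
  by move=> h; apply: h; rewrite invr_gt0.
have Dg : (iint (fun x => (`|g x * chi B x|)%:E) <= d%:E)%E.
  rewrite -hd; apply: ereal_sup_ubound; by exists g.
have r1 : 1 < p / q by rewrite ltr_pdivlMr // mul1r.
set c := s `^ (1 - p / q).
have c0 : 0 <= c by apply: powR_ge0.
apply: (@le_trans _ _ (iint (fun x => (s * chi B x + c * `|g x * chi B x|)%:E))).
  apply: iint_le.
  - apply/measurable_EFinP; apply: (@measurableT_comp _ _ _ _ _ _ (@Num.Def.normr R R)) => //.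
    exact: measurable_funM.
  - apply/measurable_EFinP; apply: measurable_funD.
      exact: measurable_funM (measurable_cst _) mchi.
    apply: measurable_funM (measurable_cst _) _.
    apply: (@measurableT_comp _ _ _ _ _ _ (@Num.Def.normr R R)) => //.
    exact: measurable_funM.
  - by move=> x; rewrite lee_fin.
  - move=> x; rewrite lee_fin /chi indicE; case: (x \in B) => /=.
      rewrite !mulr1 /g (ger0_norm (powR_ge0 _ _)).
      exact: key_ineq.
    by rewrite !mulr0 normr0 mulr0 addr0.
have -> : (fun x => (s * chi B x + c * `|g x * chi B x|)%:E) =
   (fun x => s%:E * (chi B x)%:E + c%:E * (`|g x * chi B x|)%:E)%E.
  by apply/funext => x; rewrite EFinD !EFinM.
have mgc : measurable_fun setT (fun x => (`|g x * chi B x|)%:E).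
  apply/measurable_EFinP; apply: (@measurableT_comp _ _ _ _ _ _ (@Num.Def.normr R R)) => //.
  exact: measurable_funM.
have mchiE : measurable_fun setT (fun x => (chi B x)%:E).
  exact/measurable_EFinP.
have chi0 : forall x, (0 <= (chi B x)%:E)%E.
  by move=> x; rewrite lee_fin /chi indicE ler0n.
have m1 : measurable_fun setT (fun x => s%:E * (chi B x)%:E)%E.
  exact: emeasurable_funM (measurable_cst _) mchiE.
have m2 : measurable_fun setT (fun x => c%:E * (`|g x * chi B x|)%:E)%E.
  exact: emeasurable_funM (measurable_cst _) mgc.
have n1 : forall x, (0 <= s%:E * (chi B x)%:E)%E.
  by move=> x; apply: mule_ge0; rewrite ?lee_fin // ltW.
have n2 : forall x, (0 <= c%:E * (`|g x * chi B x|)%:E)%E.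
  by move=> x; apply: mule_ge0; rewrite lee_fin.
rewrite iintD //.
have s0' : 0 <= s by exact: ltW.
rewrite iintZ //.
rewrite iintZ //.
have -> : iint (fun x => (chi B x)%:E) = V%:E.
  by rewrite -hV /iint_on; congr iint; apply/funext => x; rewrite mule1.
rewrite EFinD EFinM; apply: leeD2l; rewrite EFinM.
apply: lee_pmul => //; by [rewrite lee_fin | apply: iint_ge0 => x; rewrite lee_fin].
Qed.

End H3.


Theorem proposition2p3 (R : realType) (n : nat) (w : Rn R n -> R)
  (phi : set (Rn R n) -> R) (p q : R) :
  weight w -> phi_admissible phi -> 1 <= q -> q < p ->
  (forall B, is_eball B -> (morrey_norm q phi w (chi B) < +oo)%E) ->
  (forall B, is_eball B -> (morrey_norm p phi w (chi B) < +oo)%E) ->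
  (A_const q phi w < +oo)%E -> (A_const p phi w < +oo)%E.
Proof.
move=> hw hphiA hq1 hqp hNq hNp hA.
have [mw [hw0 _]] := hw.
have hphi := hphiA.1.
have q0 : 0 < q by exact: lt_le_trans ltr01 hq1.
have p0 : 0 < p by exact: lt_trans q0 hqp.
pose th := q / p.
have th0 : 0 < th by exact: divr_gt0.
pose M := fine (A_const q phi w).
have AM : (A_const q phi w <= M%:E)%E.
  by move: hA; rewrite /M; case: (A_const q phi w) => [a| |] //= _; rewrite leNye.
pose K := 2 * (M + 1) `^ th.
have K0 : 0 <= K by apply: mulr_ge0 => //; apply: powR_ge0.
apply: (@le_lt_trans _ _ K%:E); last exact: ltry.
apply: ge_ereal_sup => _ [B hB <-].
have hN := @N_step R n w phi p q hw0 hphi hq1 hqp B hB (hNq B hB).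
have Np0 : (0 <= morrey_norm p phi w (chi B))%E by exact: (@N_ge0 R n w phi _ B _ hB).
have Dp0 : (0 <= morrey_dual_norm p phi w (chi B))%E by exact: (@D_ge0 R n w phi p _ p0).
have I0 : (0 <= iint_on B (fun _ => 1%E))%E.
  apply: iint_ge0 => x; rewrite mule1 lee_fin indicE; exact: ler0n.
rewrite /vol.
move: I0 (@D_step R n w phi p q hw0 hphi hq1 hqp B).
case Ev: (iint_on B (fun _ => 1%E)) => [v| |] //= v0 hDs; last first.
  by rewrite invr0 mule0 lee_fin.
rewrite lee_fin in v0.
have [->|vne] := eqVneq v 0.
  by rewrite invr0 mule0 lee_fin.
have vpos : 0 < v by rewrite lt_def vne.
set Nq := morrey_norm q phi w (chi B) in hN.
have Nq0 : (0 <= Nq)%E by exact: (@N_ge0 R n w phi _ B _ hB).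
have NqE : Nq = (fine Nq)%:E by rewrite fineK // ge0_fin_numE // hNq.
set nq := fine Nq in hN NqE.
have nq0 : 0 <= nq by rewrite -lee_fin -NqE.
have [nqz|nqpos] := eqVneq nq 0.
  rewrite nqz powR0 ?gt_eqF // in hN.
  have -> : morrey_norm p phi w (chi B) = 0%E by apply/eqP; rewrite eq_le hN Np0.
  by rewrite !mul0e lee_fin.
have nqp : 0 < nq by rewrite lt_def nqpos.
have elem : (Nq * morrey_dual_norm q phi w (chi B) * (v^-1)%:E <= M%:E)%E.
  apply: le_trans AM; apply: ereal_sup_ubound; exists B => //.
  by rewrite /vol Ev.
have Dq0 : (0 <= morrey_dual_norm q phi w (chi B))%E by exact: (@D_ge0 R n w phi q _ q0).
move: elem Dq0 (hDs (fine (morrey_dual_norm q phi w (chi B)))).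
case: (morrey_dual_norm q phi w (chi B)) => [dq| |] //=; last first.
  rewrite NqE gt0_muley ?lte_fin // gt0_mulye ?lte_fin ?invr_gt0 // leye_eq.
move=> elem dq0 hD; rewrite lee_fin in dq0.
rewrite NqE -!EFinM lee_fin in elem.
pose u := (dq + v / nq) / v.
have u0 : 0 < u.
  apply: divr_gt0 => //; apply: ltr_wpDl => //; exact: divr_gt0.
pose s := u `^ th.
have s0 : 0 < s by apply: powR_gt0.
have {}hD := hD v s hB erefl erefl s0.
have key : s * v + s `^ (1 - p / q) * dq <= 2 * s * v.
  have -> : s `^ (1 - p / q) = s / u.
    rewrite /s -powRrM.
    have -> : th * (1 - p / q) = th - 1.
      by rewrite /th; field; rewrite !gt_eqF.
    rewrite powRB ?powRr1 ?(ltW u0) //.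
    by rewrite (gt_eqF u0) implybT.
  have : dq <= v * u.
    rewrite /u mulrC divfK ?gt_eqF //; apply: ler_wpDr => //.
    exact: divr_ge0 (ltW vpos) nq0.
  move=> h.
  have : s / u * dq <= s * v.
    rewrite -mulrA ler_pM2l // mulrC ler_pdivrMr //.
  move=> h2; lra.
apply: (@le_trans _ _ ((nq `^ th)%:E * (2 * s * v)%:E * (v^-1)%:E)%E).
  apply: lee_pmul => //; first exact: mule_ge0.
    by rewrite lee_fin invr_ge0 ltW.
  apply: lee_pmul => //.
  exact: le_trans hD _.
rewrite -!EFinM lee_fin.
have -> : nq `^ th * (2 * s * v) * v^-1 = 2 * (nq `^ th * s).
  by field; rewrite gt_eqF.
rewrite /s -powRM ?(ltW u0) // /K ler_pM2l //.
apply: ge0_ler_powR; first exact: ltW.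
- by rewrite nnegrE mulr_ge0 // ltW.
- rewrite nnegrE; apply: le_trans (mulr_ge0 nq0 (ltW u0)) _.
  have : nq * u = nq * dq * v^-1 + 1.
    by rewrite /u; field; rewrite !gt_eqF.
  move=> h; lra.
have : nq * u = nq * dq * v^-1 + 1.
  by rewrite /u; field; rewrite !gt_eqF.
move=> h; lra.
Qed.
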